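(* Under the Setting and Algorithm in the context, suppose $$\frac{N-s+1}{2}\min_{k\in\mathcal N}\gamma_k\eta_k>D_{\mathcal X}^2+\frac12\sum_{k\in\mathcal B}\gamma_k^2L_f^2+\frac12\sum_{k\in\mathcal N}\gamma_k^2L_{g,\mathcal X}^2.$$ Then $\mathcal B\neq\emptyset$ (so $\bar x_{N,s}$ is well defined), and moreover either (i) $|\mathcal B|\ge(N-s+1)/2$, or (ii) $\sum_{k\in\mathcal B}\gamma_k\langle f'(x_k),x_k-x^*\rangle<0$.
   Context: Setting. $\mathcal X\subset\mathbb R^n$ is convex and compact; $f:\mathcal X\to\mathbb R$ is convex and $L_f$-Lipschitz; $\Delta\subset\mathbb R^d$ is compact; $g:\mathcal X\times\Delta\to\mathbb R$ is such that for every $\delta\in\Delta$, $x\mapsto g(x,\delta)$ is convex and $L_{g,\mathcal X}$-Lipschitz, and for every $x\in\mathcal X$, $\delta\mapsto g(x,\delta)$ is $L_{g,\Delta}$-Lipschitz. Let $G(x):=\max_{\delta\in\Delta}g(x,\delta)$ and assume the problem $\min_{x\in\mathcal X}\{f(x):G(x)\le0\}$ has an optimal solution $x^*$. Norms are Euclidean. $f'(x)$ denotes a subgradient of $f$ at $x$ and $g'(x,\delta)$ a subgradient of $g(\cdot,\delta)$ at $x$. Let $\omega_{\mathcal X}:\mathcal X\to\mathbb R$ be continuously differentiable and $1$-strongly convex; $V(x,z):=\omega_{\mathcal X}(z)-\omega_{\mathcal X}(x)-\langle\nabla\omega_{\mathcal X}(x),z-x\rangle$; prox-mapping $P_{x,\mathcal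 X}(y):=\arg\min_{z\in\mathcal X}\{\langle y,z\rangle+V(x,z)\}$; $D_{\mathcal X}:=\sqrt{\max_{x,z\in\mathcal X}V(x,z)}$. Algorithm (inexact CSA). Inputs: $N\ge1$, $x_1\in\mathcal X$, tolerances $\eta_k>0$, step-sizes $\gamma_k>0$. For $k=1,\dots,N$: choose some $\delta_k\in\Delta$ (an approximate maximizer of $g(x_k,\cdot)$); set $h_k=f'(x_k)$ if $g(x_k,\delta_k)\le\eta_k$ and $h_k=g'(x_k,\delta_k)$ otherwise; set $x_{k+1}=P_{x_k,\mathcal X}(\gamma_kh_k)$. For $1\le s\le N$ let $I=\{s,\dots,N\}$, $\mathcal B:=\{k\in I: g(x_k,\delta_k)\le\eta_k\}$, $\mathcal N:=I\setminus\mathcal B$, and output $\bar x_{N,s}:=\sum_{k\in\mathcal B}\gamma_kx_k/\sum_{k\in\mathcal B}\gamma_k$. (The minimum over an empty set is $+\infty$.) *)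

(* Defs.v *)
From Stdlib Require Import Reals.
From mathcomp Require Import ssreflect ssrfun ssrbool eqtype ssrnat seq fintype bigop.
Set Implicit Arguments. Unset Strict Implicit.
Open Scope R_scope.

Definition vec (n : nat) := 'I_n -> R.
Definition dot {n} (x y : vec n) : R := \big[Rplus/0]_(i < n) (x i * y i).
Definition norm {n} (x : vec n) : R := sqrt (dot x x).
Definition vadd {n} (x y : vec n) : vec n := fun i => x i + y i.
Definition vsub {n} (x y : vec n) : vec n := fun i => x i - y i.
Definition vscale {n} (a : R) (x : vec n) : vec n := fun i => a * x i.

Definition convex_set {n} (S : vec n -> Prop) : Prop :=
  forall x y t, S x -> S y -> 0 <= t <= 1 -> S (vadd (vscale t x) (vscale (1 - t) y)).

Definition compact_set {n} (S : vec n -> Prop) : Prop :=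
  forall u : nat -> vec n, (forall k, S (u k)) ->
  exists (phi : nat -> nat) (l : vec n),
    (forall i j, (i < j)%N -> (phi i < phi j)%N) /\ S l /\
    Un_cv (fun k => norm (vsub (u (phi k)) l)) 0.

Definition convex_fun {n} (f : vec n -> R) : Prop :=
  forall x y t, 0 <= t <= 1 ->
    f (vadd (vscale t x) (vscale (1 - t) y)) <= t * f x + (1 - t) * f y.

Definition lipschitz_on {n} (S : vec n -> Prop) (f : vec n -> R) (L : R) : Prop :=
  forall x y, S x -> S y -> Rabs (f x - f y) <= L * norm (vsub x y).

Definition is_subgradient {n} (f : vec n -> R) (x v : vec n) : Prop :=
  forall z, f x + dot v (vsub z x) <= f z.

Definition has_gradient_at {n} (w : vec n -> R) (x v : vec n) : Prop :=
  forall eps, 0 < eps -> exists del, 0 < del /\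
    forall h, norm h < del -> Rabs (w (vadd x h) - w x - dot v h) <= eps * norm h.

Definition C1_on {n} (S : vec n -> Prop) (w : vec n -> R) (gw : vec n -> vec n) : Prop :=
  (forall x, S x -> has_gradient_at w x (gw x)) /\
  (forall x, S x -> forall eps, 0 < eps -> exists del, 0 < del /\
     forall y, S y -> norm (vsub y x) < del -> norm (vsub (gw y) (gw x)) < eps).

Definition strongly_convex_on {n} (S : vec n -> Prop) (w : vec n -> R) (mu : R) : Prop :=
  forall x y t, S x -> S y -> 0 <= t <= 1 ->
    w (vadd (vscale t x) (vscale (1 - t) y))
      <= t * w x + (1 - t) * w y - mu / 2 * t * (1 - t) * (norm (vsub x y)) ^ 2.

Definition bregman {n} (w : vec n -> R) (gw : vec n -> vec n) (x z : vec n) : R :=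
  w z - w x - dot (gw x) (vsub z x).

Definition is_prox {n} (X : vec n -> Prop) (w : vec n -> R) (gw : vec n -> vec n)
  (x y z : vec n) : Prop :=
  X z /\ forall u, X u -> dot y z + bregman w gw x z <= dot y u + bregman w gw x u.

Definition is_max_over {A : Type} (S : A -> Prop) (phi : A -> R) (m : R) : Prop :=
  (exists a, S a /\ phi a = m) /\ (forall a, S a -> phi a <= m).

Definition G_le0 {n p} (g : vec n -> vec p -> R) (Delta : vec p -> Prop) (x : vec n) : Prop :=
  exists Gx, is_max_over Delta (g x) Gx /\ Gx <= 0.

Definition is_optimal {n p} (X : vec n -> Prop) (f : vec n -> R)
  (g : vec n -> vec p -> R) (Delta : vec p -> Prop) (xs : vec n) : Prop :=
  X xs /\ G_le0 g Delta xs /\ forall x, X x -> G_le0 g Delta x -> f xs <= f x.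

Definition Rleb (a b : R) : bool := if Rle_dec a b then true else false.

Definition csa_dir {n p} (fsub : vec n -> vec n) (gsub : vec n -> vec p -> vec n)
  (g : vec n -> vec p -> R) (x : vec n) (d : vec p) (eta : R) : vec n :=
  if Rle_dec (g x d) eta then fsub x else gsub x d.

(* membership of k in the index set B (given k in I = {s..N}) *)
Definition inB {n p} (g : vec n -> vec p -> R) (x : nat -> vec n) (delta : nat -> vec p)
  (eta : nat -> R) (k : nat) : bool :=
  Rleb (g (x k) (delta k)) (eta k).

(* Main.v *)
Require Import Defs.
From Stdlib Require Import Reals Lra Psatz FunctionalExtensionality Classical.
From mathcomp Require Import ssreflect ssrfun ssrbool eqtype ssrnat seq fintype bigop.
From mathcomp Require Import zify.
Open Scope R_scope.
Set Implicit Arguments.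

Section BigR.
Variable T : Type.
Implicit Types (r : seq T) (P : pred T) (F G : T -> R).

Lemma bigR_lin r P F G a b :
  \big[Rplus/0]_(i <- r | P i) (a * F i + b * G i) =
  a * \big[Rplus/0]_(i <- r | P i) F i + b * \big[Rplus/0]_(i <- r | P i) G i.
Proof. elim: r => [|y r IH]; rewrite ?big_nil ?big_cons; first lra.
case: (P y); rewrite IH; ring. Qed.

Lemma bigR_const r P c :
  \big[Rplus/0]_(i <- r | P i) c = INR (count P r) * c.
Proof. elim: r => [|y r IH]; rewrite ?big_nil ?big_cons; first (simpl; lra).
rewrite (_ : count P (y :: r) = (P y + count P r)%N) //.
case: (P y); rewrite IH; last (rewrite add0n; ring).
rewrite add1n S_INR; ring. Qed.

Lemma bigR_split r P F :
  \big[Rplus/0]_(i <- r) F i =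
  \big[Rplus/0]_(i <- r | P i) F i + \big[Rplus/0]_(i <- r | ~~ P i) F i.
Proof. elim: r => [|y r IH]; rewrite ?big_nil ?big_cons; first lra.
case: (P y) => /=; rewrite IH; ring. Qed.

End BigR.



Section BigRm.
Variable T : eqType.
Implicit Types (r : seq T) (P : pred T) (F G : T -> R).

Lemma bigR_ext r P F G : (forall i, i \in r -> P i -> F i = G i) ->
  \big[Rplus/0]_(i <- r | P i) F i = \big[Rplus/0]_(i <- r | P i) G i.
Proof. elim: r => [|y r IH] H; rewrite ?big_nil ?big_cons //.
rewrite IH; last by move=> i ir Pi; apply: H => //; rewrite in_cons ir orbT.
case Py: (P y) => //; rewrite H // in_cons eqxx //. Qed.

Lemma bigR_le r P F G : (forall i, i \in r -> P i -> F i <= G i) ->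
  \big[Rplus/0]_(i <- r | P i) F i <= \big[Rplus/0]_(i <- r | P i) G i.
Proof. elim: r => [|y r IH] H; rewrite ?big_nil ?big_cons; first lra.
have := IH (fun i ir Pi => H i ltac:(rewrite in_cons ir orbT //) Pi).
case Py: (P y) => //; have := H y ltac:(rewrite in_cons eqxx //) Py; lra. Qed.

Lemma bigR_ge0 r P F : (forall i, i \in r -> P i -> 0 <= F i) ->
  0 <= \big[Rplus/0]_(i <- r | P i) F i.
Proof. elim: r => [|y r IH] H; rewrite ?big_nil ?big_cons; first lra.
have := IH (fun i ir Pi => H i ltac:(rewrite in_cons ir orbT //) Pi).
case Py: (P y) => //; have := H y ltac:(rewrite in_cons eqxx //) Py; lra. Qed.

Lemma bigR_pos r P F :
  (forall i, i \in r -> P i -> 0 < F i) -> (exists i, i \in r /\ P i) ->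
  0 < \big[Rplus/0]_(i <- r | P i) F i.
Proof.
elim: r => [|y r IH] H [i [ir Pi]] //.
rewrite big_cons.
have H' : forall i, i \in r -> P i -> 0 < F i.
  by move=> j jr Pj; apply: H => //; rewrite in_cons jr orbT.
have Hy : P y -> 0 < F y by move=> Py; apply: H => //; rewrite in_cons eqxx.
have Hnn := @bigR_ge0 r P F (fun j jr Pj => Rlt_le _ _ (H' j jr Pj)).
move: ir; rewrite in_cons => /orP [/eqP Ei|ir].
  subst i; rewrite Pi; have := Hy Pi; lra.
have := IH H' (ex_intro _ i (conj ir Pi)); case Py: (P y) => //; have := Hy Py; lra.
Qed.
End BigRm.


Section Dot.
Variable n : nat.
Implicit Types a b c : vec n.

Lemma dot_comm a b : dot a b = dot b a.
Proof. rewrite /dot; apply: bigR_ext => i _ _;  ring. Qed.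

Lemma dot_linr a b c s t :
  dot a (fun i => s * b i + t * c i) = s * dot a b + t * dot a c.
Proof. rewrite /dot -bigR_lin; apply: bigR_ext => i _ _;  ring. Qed.

Lemma dot_subr a b c : dot a (vsub b c) = dot a b - dot a c.
Proof. rewrite /vsub (_ : (fun i => b i - c i) = (fun i => 1 * b i + (-1) * c i)).
  by rewrite dot_linr; ring.
by apply: functional_extensionality => i; ring. Qed.

Lemma dot_addr a b c : dot a (vadd b c) = dot a b + dot a c.
Proof. rewrite /vadd (_ : (fun i => b i + c i) = (fun i => 1 * b i + 1 * c i)).
  by rewrite dot_linr; ring.
by apply: functional_extensionality => i; ring. Qed.

Lemma dot_scaler a t b : dot a (vscale t b) = t * dot a b.
Proof. rewrite /vscale (_ : (fun i => t * b i) = (fun i => t * b i + 0 * b i)).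
  by rewrite dot_linr; ring.
by apply: functional_extensionality => i; ring. Qed.

Lemma dot_subl a b c : dot (vsub b c) a = dot b a - dot c a.
Proof. by rewrite dot_comm dot_subr !(dot_comm a). Qed.
Lemma dot_addl a b c : dot (vadd b c) a = dot b a + dot c a.
Proof. by rewrite dot_comm dot_addr !(dot_comm a). Qed.
Lemma dot_scalel a t b : dot (vscale t b) a = t * dot b a.
Proof. by rewrite dot_comm dot_scaler (dot_comm a). Qed.

Lemma dot_ge0 a : 0 <= dot a a.
Proof. rewrite /dot.
apply: bigR_ge0 => i _ _ ; nra. Qed.

Lemma norm_sq a : norm a * norm a = dot a a.
Proof. rewrite /norm sqrt_sqrt //; exact: dot_ge0. Qed.

Lemma norm_ge0 a : 0 <= norm a.
Proof. exact: sqrt_pos. Qed.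

Lemma norm_scale t a : 0 <= t -> norm (vscale t a) = t * norm a.
Proof. move=> t0; rewrite /norm dot_scalel dot_scaler -Rmult_assoc.
rewrite sqrt_mult_alt; last nra. by rewrite sqrt_square. Qed.

Lemma dot_sq_expand (k : R) a b :
  dot (vsub (vscale k a) b) (vsub (vscale k a) b) =
  k * k * dot a a - 2 * k * dot a b + dot b b.
Proof. rewrite !dot_subl !dot_subr !dot_scalel !dot_scaler (dot_comm b a); ring. Qed.

Lemma dot_subsym a b : dot (vsub a b) (vsub a b) = dot (vsub b a) (vsub b a).
Proof. rewrite !dot_subl !dot_subr (dot_comm a b); ring. Qed.

End Dot.

Lemma subgrad_bound n (f : vec n -> R) L xx v :
  lipschitz_on (fun _ => True) f L -> is_subgradient f xx v -> dot v v <= L ^ 2.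
Proof.
move=> HL Hs.
have H1 := Hs (vadd xx v).
have E : vsub (vadd xx v) xx = v.
  by apply: functional_extensionality => i; rewrite /vsub /vadd; ring.
rewrite E in H1.
have H2 := HL (vadd xx v) xx I I. rewrite E in H2.
have H3 := Rle_abs (f (vadd xx v) - f xx).
move: H1 H2 H3 (norm_sq v) (norm_ge0 v); move: (norm v) => r H1 H2 H3 Hd Hr.
have Hrr : r * r <= L * r.
  move: H1 H2 H3; rewrite -Hd; move: (L * r) (r * r) => a b; lra.
rewrite -Hd; case: (Rle_lt_or_eq_dec 0 r Hr) => [rp|<-]; last nra.
have : r <= L by apply: (Rmult_le_reg_r r) => //; lra.
nra.
Qed.


Lemma strong_lb n (X : vec n -> Prop) w gw x z :
  strongly_convex_on X w 1 -> C1_on X w gw -> X x -> X z ->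
  dot (vsub z x) (vsub z x) / 2 <= bregman w gw x z.
Proof.
move=> SC [Hg _] Xx Xz.
apply: Rnot_lt_le => HQ.
have Hr := norm_sq (vsub z x); have r0 := norm_ge0 (vsub z x).
move: HQ Hr r0 (SC z x) (@norm_scale n).
rewrite /bregman. set V := w z - w x - dot (gw x) (vsub z x).
move Er: (norm (vsub z x)) => r HQ Hr r0 SCzx NS.
rewrite -Hr in HQ.
set Q := V - r * r / 2.
have Qn : Q < 0 by rewrite /Q; lra.
set eps := - Q / (2 * (r + 1)).
have epsp : 0 < eps by rewrite /eps; apply: Rdiv_lt_0_compat; lra.
have [del [dp Hd]] := Hg x Xx eps epsp.
set t := Rmin 1 (Rmin (del / (2 * (r + 1))) (- Q / (2 * (r * r + 1)))).
have t1 : t <= 1 by apply: Rmin_l.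
have t2 : t <= del / (2 * (r + 1)) by rewrite /t; apply: Rle_trans (Rmin_r _ _) (Rmin_l _ _).
have t3 : t <= - Q / (2 * (r * r + 1)) by rewrite /t; apply: Rle_trans (Rmin_r _ _) (Rmin_r _ _).
have tp : 0 < t.
  apply: Rmin_glb_lt; first lra.
  apply: Rmin_glb_lt; apply: Rdiv_lt_0_compat; nra.
set h := vscale t (vsub z x).
have E : vadd (vscale t z) (vscale (1 - t) x) = vadd x h.
  by apply: functional_extensionality => i; rewrite /h /vadd /vscale /vsub /=; ring.
have := SCzx t Xz Xx (conj (Rlt_le _ _ tp) t1); rewrite E => Hsc.
have Nh : norm h = t * r by rewrite /h NS ?Er; lra.
have Nhd : norm h < del.
  rewrite Nh.
  have : t * (2 * (r + 1)) <= del.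
    have := Rmult_le_compat_r (2 * (r + 1)) _ _ ltac:(lra) t2.
    by rewrite /Rdiv Rmult_assoc Rinv_l; [lra | lra].
  nra.
have := Hd h Nhd; rewrite Nh /h dot_scaler => Hgr.
have Habs := Rle_abs (- (w (vadd x h) - w x - t * dot (gw x) (vsub z x))).
rewrite Rabs_Ropp in Habs.
have F1 : t * V >= t * ((1 - t) * (r * r) / 2 - eps * r).
  rewrite /V. move: Hsc Hgr Habs. rewrite /pow. move: (w (vadd x h)) => W.
  move: (dot (gw x) (vsub z x)) => G. nra.
have F1' : V >= (1 - t) * (r * r) / 2 - eps * r.
  apply: Rle_ge; apply: (Rmult_le_reg_l t) => //; lra.
have F2 : t * (r * r) <= - Q / 2.
  have : t * (2 * (r * r + 1)) <= - Q.
    have := Rmult_le_compat_r (2 * (r * r + 1)) _ _ ltac:(nra) t3.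
    by rewrite /Rdiv Rmult_assoc Rinv_l; [lra | nra].
  nra.
have F3 : eps * r <= - Q / 2.
  have : eps * (2 * (r + 1)) = - Q by rewrite /eps; field; lra.
  nra.
have : Q >= - (t * (r * r)) / 2 - eps * r by rewrite /Q; nra.
lra.
Qed.

Lemma prox_vi n (X : vec n -> Prop) w gw x y z u :
  convex_set X -> C1_on X w gw -> is_prox X w gw x y z -> X u ->
  0 <= dot y (vsub u z) + dot (gw z) (vsub u z) - dot (gw x) (vsub u z).
Proof.
move=> CX [Hg _] [Xz Hopt] Xu.
apply: Rnot_lt_le => HQ.
have r0 := norm_ge0 (vsub u z).
move: HQ r0 (@norm_scale n).
set Q := dot y (vsub u z) + dot (gw z) (vsub u z) - dot (gw x) (vsub u z).
move Er: (norm (vsub u z)) => r Qn r0 NS.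
set eps := - Q / (2 * (r + 1)).
have epsp : 0 < eps by rewrite /eps; apply: Rdiv_lt_0_compat; lra.
have [del [dp Hd]] := Hg z Xz eps epsp.
set t := Rmin 1 (del / (2 * (r + 1))).
have t1 : t <= 1 by apply: Rmin_l.
have t2 : t <= del / (2 * (r + 1)) by apply: Rmin_r.
have tp : 0 < t.
  apply: Rmin_glb_lt; first lra.
  apply: Rdiv_lt_0_compat; nra.
set h := vscale t (vsub u z).
have E : vadd (vscale t u) (vscale (1 - t) z) = vadd z h.
  by apply: functional_extensionality => i; rewrite /h /vadd /vscale /vsub /=; ring.
have Xut := CX u z t Xu Xz (conj (Rlt_le _ _ tp) t1); rewrite E in Xut.
have Nh : norm h = t * r by rewrite /h NS ?Er; lra.
have Nhd : norm h < del.
  rewrite Nh.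
  have : t * (2 * (r + 1)) <= del.
    have := Rmult_le_compat_r (2 * (r + 1)) _ _ ltac:(lra) t2.
    by rewrite /Rdiv Rmult_assoc Rinv_l; [lra | lra].
  nra.
have := Hd h Nhd; rewrite Nh /h dot_scaler => Hgr.
have Habs := Rle_abs (w (vadd z h) - w z - t * dot (gw z) (vsub u z)).
have Ho := Hopt _ Xut.
have E2 : vsub (vadd z h) x = vadd (vsub z x) h.
  by apply: functional_extensionality => i; rewrite /h /vadd /vscale /vsub /=; ring.
move: Ho; rewrite /bregman E2 !dot_addr /h !dot_scaler => Ho.
have F3 : eps * r <= - Q / 2.
  have : eps * (2 * (r + 1)) = - Q by rewrite /eps; field; lra.
  nra.
have : 0 <= t * (Q + eps * r).
  rewrite /Q. move: Ho Hgr Habs. move: (w (vadd z h)) => W. nra.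
nra.
Qed.


Lemma step n (X : vec n -> Prop) w gw xk z u hk (c : R) :
  convex_set X -> C1_on X w gw -> strongly_convex_on X w 1 -> X xk -> X u ->
  is_prox X w gw xk (vscale c hk) z ->
  c * dot hk (vsub xk u) <= c * c * dot hk hk / 2 + bregman w gw xk u - bregman w gw z u.
Proof.
move=> CX C1 SC Xx Xu Hp.
have VI := prox_vi u CX C1 Hp Xu.
have Xz : X z by case: Hp.
have SL := strong_lb xk z SC C1 Xx Xz.
have Sq := dot_ge0 (vsub (vscale c hk) (vsub xk z)).
rewrite dot_sq_expand in Sq.
rewrite dot_subsym in SL.
move: VI SL Sq; rewrite /bregman dot_scalel !dot_subr.
move: (dot (vsub xk z) (vsub xk z)) => S.
move: (dot hk u) (dot hk z) (dot hk xk) (dot hk hk) => hu hz hx hh.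
move=> VI SL Sq.
have E1 : c * (hu - hz) = c * hu - c * hz by ring.
have E2 : c * (hx - hz) = c * hx - c * hz by ring.
have E3 : c * (hx - hu) = c * hx - c * hu by ring.
rewrite E3. rewrite E1 in VI.
have E4 : 2 * c * (hx - hz) = 2 * (c * hx) - 2 * (c * hz) by ring.
rewrite E4 in Sq.
move: (c * hx) (c * hz) (c * hu) (c * c * hh) => A1 A2 A3 A4 in VI SL Sq *.
lra.
Qed.


Lemma telesc (a e b : nat -> R) len : forall m,
  (forall k, (m <= k < m + len)%N -> a k <= e k + b k - b k.+1) ->
  \big[Rplus/0]_(k <- iota m len) a k <=
  \big[Rplus/0]_(k <- iota m len) e k + b m - b (m + len)%N.
Proof.
elim: len => [|len IH] m H.
  rewrite !big_nil addn0; lra.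
rewrite /= !big_cons.
have H1 := H m ltac:(rewrite leqnn /= addnS ltnS leq_addr //).
have H2 := IH m.+1 (fun k hk => H k ltac:(move: hk => /andP [h1 h2];
   rewrite (ltnW h1) /= addnS; rewrite addSn in h2; exact: h2)).
rewrite addSnnS in H2; lra.
Qed.

Lemma bigR_scal (T : Type) (r : seq T) (P : pred T) (F : T -> R) c :
  \big[Rplus/0]_(i <- r | P i) (c * F i) = c * \big[Rplus/0]_(i <- r | P i) F i.
Proof. elim: r => [|y r IH]; rewrite ?big_nil ?big_cons; first ring.
case: (P y); rewrite IH; ring. Qed.

Lemma mem_range s N k : (k \in index_iota s N.+1) = (s <= k <= N)%N.
Proof. by rewrite mem_index_iota ltnS. Qed.

Unset Implicit Arguments.

Theorem mainTheorem16
  (n p : nat) (X : vec n -> Prop) (Delta : vec p -> Prop)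
  (f : vec n -> R) (Lf : R) (g : vec n -> vec p -> R) (LgX LgD : R)
  (fsub : vec n -> vec n) (gsub : vec n -> vec p -> vec n)
  (xstar : vec n) (w : vec n -> R) (gw : vec n -> vec n) (D : R)
  (N s : nat) (x : nat -> vec n) (delta : nat -> vec p) (eta gamma : nat -> R) :
  (* Setting *)
  convex_set X -> compact_set X ->
  convex_fun f -> lipschitz_on (fun _ => True) f Lf ->
  compact_set Delta ->
  (forall d, Delta d -> convex_fun (fun y => g y d)) ->
  (forall d, Delta d -> lipschitz_on (fun _ => True) (fun y => g y d) LgX) ->
  (forall y, X y -> lipschitz_on Delta (g y) LgD) ->
  (forall y, X y -> is_subgradient f y (fsub y)) ->
  (forall y d, X y -> Delta d -> is_subgradient (fun z => g z d) y (gsub y d)) ->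
  is_optimal X f g Delta xstar ->
  C1_on X w gw -> strongly_convex_on X w 1 ->
  0 <= D ->
  is_max_over (fun q : vec n * vec n => X q.1 /\ X q.2)
              (fun q => bregman w gw q.1 q.2) (D ^ 2) ->
  (* Algorithm *)
  (1 <= s <= N)%N ->
  X (x 1%N) ->
  (forall k, (1 <= k <= N)%N -> Delta (delta k)) ->
  (forall k, (1 <= k <= N)%N -> 0 < eta k) ->
  (forall k, (1 <= k <= N)%N -> 0 < gamma k) ->
  (forall k, (1 <= k <= N)%N ->
     is_prox X w gw (x k)
       (vscale (gamma k) (csa_dir fsub gsub g (x k) (delta k) (eta k))) (x k.+1)) ->
  (* hypothesis: (N-s+1)/2 * min_{k in N} gamma_k eta_k > ... (min over empty set = +oo) *)
  (forall k, (s <= k <= N)%N -> inB g x delta eta k = false ->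
     INR (N - s + 1) / 2 * (gamma k * eta k) >
       D ^ 2
       + 1 / 2 * \big[Rplus/0]_(s <= j < N.+1 | inB g x delta eta j) (gamma j ^ 2 * Lf ^ 2)
       + 1 / 2 * \big[Rplus/0]_(s <= j < N.+1 | ~~ inB g x delta eta j) (gamma j ^ 2 * LgX ^ 2)) ->
  (* conclusion *)
  (exists k, (s <= k <= N)%N /\ inB g x delta eta k = true) /\
  (INR (count (inB g x delta eta) (index_iota s N.+1)) >= INR (N - s + 1) / 2
   \/ \big[Rplus/0]_(s <= k < N.+1 | inB g x delta eta k)
        (gamma k * dot (fsub (x k)) (vsub (x k) xstar)) < 0).
Proof.
move=> CX _ _ HLf _ _ HLg _ Hfs Hgs [Xst [[Gx [[_ HGx] Gx0]] _]] C1 SC D0 [_ HD]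
  /andP [s1 sN] X1 HDel Heta Hgam Hprox Hmain.
set inBk := inB g x delta eta.
have Xk : forall k, (1 <= k <= N.+1)%N -> X (x k).
  elim=> [|k IH] // /andP [k1 kN].
  case: k IH k1 kN => [|k] IH _ kN; first exact: X1.
  have [Xz _] := Hprox k.+1 ltac:(apply/andP; split; lia).
  exact: Xz.
set hk := fun k => csa_dir fsub gsub g (x k) (delta k) (eta k).
set a := fun k => gamma k * dot (hk k) (vsub (x k) xstar).
set b := fun k => bregman w gw (x k) xstar.
set e := fun k => if inBk k then 1 / 2 * (gamma k ^ 2 * Lf ^ 2)
                  else 1 / 2 * (gamma k ^ 2 * LgX ^ 2).
have HB : forall k, inBk k = true -> hk k = fsub (x k).
  by move=> k; rewrite /inBk /inB /Rleb /hk /csa_dir; case: Rle_dec.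
have HN : forall k, inBk k = false -> hk k = gsub (x k) (delta k) /\ eta k < g (x k) (delta k).
  move=> k; rewrite /inBk /inB /Rleb /hk /csa_dir; case: Rle_dec => // Hn _.
  split => //; lra.
have Hstep : forall k, (s <= k <= N)%N -> a k <= e k + b k - b k.+1.
  move=> k /andP [sk kN].
  have k1 : (1 <= k <= N)%N by rewrite kN (leq_trans s1 sk).
  have Xxk : X (x k) by apply: Xk; rewrite (leq_trans s1 sk) (leq_trans kN).
  have St := @step n X w gw (x k) (x k.+1) xstar (hk k) (gamma k) CX C1 SC Xxk Xst (Hprox k k1).
  have gp := Hgam k k1.
  have Hhh : dot (hk k) (hk k) <= (if inBk k then Lf ^ 2 else LgX ^ 2).
    case Ek: (inBk k).
      rewrite HB //; apply: subgrad_bound HLf (Hfs _ Xxk).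
    have [-> _] := HN k Ek.
    have Dk := HDel k k1.
    exact: subgrad_bound (HLg _ Dk) (Hgs _ _ Xxk Dk).
  rewrite /a /e /b.
  have : gamma k * gamma k * dot (hk k) (hk k) / 2 <=
         1 / 2 * (gamma k ^ 2 * (if inBk k then Lf ^ 2 else LgX ^ 2)).
    have := Rmult_le_compat_l (gamma k * gamma k) _ _ ltac:(nra) Hhh. lra.
  case: (inBk k) => ?; lra.
set r := index_iota s N.+1.
have memr : forall k, k \in r -> (s <= k <= N)%N by move=> k; rewrite mem_range.
have Tel : \big[Rplus/0]_(k <- r) a k <= \big[Rplus/0]_(k <- r) e k + b s - b N.+1.
  have := @telesc a e b (N.+1 - s) s (fun k hk => Hstep k ltac:(apply/andP; split; lia)).
  by rewrite (_ : (s + (N.+1 - s))%N = N.+1) //; lia.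
have Xs : X (x s) by apply: Xk; apply/andP; split; lia.
have XN : X (x N.+1) by apply: Xk; apply/andP; split; lia.
have Hbs : b s <= D ^ 2 by apply: (HD (x s, xstar)).
have HbN : 0 <= b N.+1.
  have := strong_lb (x N.+1) xstar SC C1 XN Xst.
  have := dot_ge0 (vsub xstar (x N.+1)). rewrite /b; lra.
set SBf := \big[Rplus/0]_(s <= j < N.+1 | inBk j) (gamma j ^ 2 * Lf ^ 2).
set SNg := \big[Rplus/0]_(s <= j < N.+1 | ~~ inBk j) (gamma j ^ 2 * LgX ^ 2).
set T := D ^ 2 + 1 / 2 * SBf + 1 / 2 * SNg.
have Se : \big[Rplus/0]_(k <- r) e k = 1 / 2 * SBf + 1 / 2 * SNg.
  rewrite (bigR_split _ inBk) /SBf /SNg -!bigR_scal.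
  congr (_ + _); apply: bigR_ext => i _; rewrite /e; [move=> -> // | by case: (inBk i)].
have T0 : 0 <= T.
  have : 0 <= SBf by apply: bigR_ge0 => i _ _; nra.
  have : 0 <= SNg by apply: bigR_ge0 => i _ _; nra.
  have := pow2_ge_0 D. rewrite /T; lra.
set SB := \big[Rplus/0]_(s <= k < N.+1 | inBk k) (gamma k * dot (fsub (x k)) (vsub (x k) xstar)).
set E := \big[Rplus/0]_(k <- r | ~~ inBk k) (gamma k * eta k).
have Sa : SB + E <= \big[Rplus/0]_(k <- r) a k.
  rewrite (bigR_split _ inBk).
  have -> : \big[Rplus/0]_(k <- r | inBk k) a k = SB.
    by apply: bigR_ext => i _ Hi; rewrite /a HB.
  apply: Rplus_le_compat_l; apply: bigR_le => k kr Hk.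
  have Hk' : inBk k = false by move: Hk; case: (inBk k).
  have [Eh Hg] := HN k Hk'.
  have k1 : (1 <= k <= N)%N by have := memr k kr; lia.
  have Xxk : X (x k) by apply: Xk; have := memr k kr; lia.
  have Dk := HDel k k1.
  have Sg := Hgs _ _ Xxk Dk xstar.
  have Gs := HGx _ Dk.
  rewrite /a Eh; apply: Rmult_le_compat_l; first exact: Rlt_le (Hgam k k1).
  move: Sg; rewrite !dot_subr; lra.
have SBneg : INR (count (fun j => ~~ inBk j) r) > INR (N - s + 1) / 2 -> SB < 0.
  move=> Hc.
  have Mp : 0 < INR (N - s + 1) by apply: lt_0_INR; lia.
  have cNp : (0 < count (fun j => ~~ inBk j) r)%N.
    rewrite lt0n; apply/eqP => H0; rewrite H0 /= in Hc; lra.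
  have /hasP [k kr Hk] : has (fun j => ~~ inBk j) r by rewrite has_count.
  have Hterm : forall k, k \in r -> ~~ inBk k ->
      0 < INR (N - s + 1) / 2 * (gamma k * eta k) - T.
    move=> k0 kr0 Hk0.
    have Hk' : inBk k0 = false by move: Hk0; case: (inBk k0).
    have HM : INR (N - s + 1) / 2 * (gamma k0 * eta k0) > T := Hmain k0 (memr k0 kr0) Hk'.
    lra.
  have Pos := @bigR_pos _ r (fun j => ~~ inBk j)
     (fun k => INR (N - s + 1) / 2 * (gamma k * eta k) - T)
     Hterm (ex_intro _ k (conj kr Hk)).
  have Eq : \big[Rplus/0]_(k <- r | ~~ inBk k) (INR (N - s + 1) / 2 * (gamma k * eta k) - T)
     = INR (N - s + 1) / 2 * E + (- T) * (INR (count (fun j => ~~ inBk j) r) * 1).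
    rewrite /E -(bigR_const r _ 1) -bigR_lin; apply: bigR_ext => i _ _; ring.
  rewrite Eq in Pos.
  move: Pos Hc Mp; move: (INR (count (fun j => ~~ inBk j) r)) (INR (N - s + 1)) => cN M Pos Hc Mp.
  have H1 : cN * T >= M / 2 * T by apply: Rle_ge; apply: Rmult_le_compat_r; lra.
  have H2 : M / 2 * (E - T) > 0 by lra.
  have H3 : E - T > 0.
    apply: Rnot_le_gt => H4; have : M / 2 * (E - T) <= 0; last lra.
    have := Rmult_le_compat_l (M / 2) _ _ ltac:(lra) H4; lra.
  rewrite Se in Tel; rewrite /T in H3; lra.
have Hcnt : (count inBk r + count (fun j => ~~ inBk j) r)%N = (N - s + 1)%N.
  have := count_predC inBk r.
  change (count (predC inBk) r) with (count (fun j => ~~ inBk j) r).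
  rewrite /r /index_iota size_iota => ->; lia.
have HcR : INR (count inBk r) + INR (count (fun j => ~~ inBk j) r) = INR (N - s + 1).
  rewrite -plus_INR; f_equal; lia.
split.
  apply: NNPP => Hno.
  have Hall : forall k, k \in r -> inBk k = false.
    move=> k kr; case Ek: (inBk k) => //; exfalso; apply: Hno; exists k; split => //.
    exact: memr.
  have SB0 : SB = 0.
    rewrite /SB (@bigR_ext _ _ _ _ (fun _ => 0)); first by rewrite bigR_const; ring.
    by move=> i ir Hi; rewrite Hall in Hi.
  have cB0 : count inBk r = 0%N.
    apply/eqP; rewrite -leqn0 leqNgt -has_count; apply/hasPn => k kr; rewrite Hall //.
  rewrite cB0 /= in HcR.
  have Mp : 0 < INR (N - s + 1) by apply: lt_0_INR; lia.
  have := SBneg ltac:(lra); lra.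
case: (Rle_or_lt (INR (N - s + 1) / 2) (INR (count inBk r))) => Hc.
  by left; apply: Rle_ge.
right; apply: SBneg; lra.
Qed.
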